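(* Let $P\in\mathcal{P}$, suppose $\nu:\mathcal{P}\to\mathcal{H}$ is pathwise differentiable at $P$, and let $\beta=(\beta_k)_{k\ge1}\in\ell^2\cap[0,1]^{\mathbb{N}}$. Define $r_P^\beta(h)(z)=\sum_{k=1}^\infty\beta_k\langle h,h_k\rangle_{\mathcal{H}}\dot{\nu}_P^*(h_k)(z)$. Then there is a set $\mathcal{Z}^\beta$ of $P$-probability one such that for every $z\in\mathcal{Z}^\beta$, $r_P^\beta(\cdot)(z):\mathcal{H}\to\mathbb{R}$ is a bounded linear functional with Riesz representation $$\phi_P^\beta(z)=\sum_{k=1}^\infty\beta_k\dot{\nu}_P^*(h_k)(z)h_k.$$ Moreover, $\sigma_P(\beta):=\|\phi_P^\beta\|_{L^2(P;\mathcal{H})}=\big[\sum_{k=1}^\infty\beta_k^2P\{\dot{\nu}_P^*(h_k)^2\}\big]^{1/2}\le\|\dot{\nu}_P^*\|_{\mathrm{op}}\|\beta\|_{\ell^2}<\infty$.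
   Context: Let $(\mathcal{Z},\mathbf{B})$ be a Polish space and $\mathcal{P}$ a model of probability distributions on it dominated by a $\sigma$-finite measure $\lambda$. For $P\in\mathcal{P}$ and $s\in L^2(P)$, $\mathscr{P}(P,\mathcal{P},s)$ is the set of submodels $\{P_\epsilon:\epsilon\in[0,\delta)\}\subset\mathcal{P}$ with $\|p_\epsilon^{1/2}-p^{1/2}-\epsilon s p^{1/2}/2\|_{L^2(\lambda)}=o(\epsilon)$ ($p_\epsilon,p$ the $\lambda$-densities). The tangent set is $\{s:\mathscr{P}(P,\mathcal{P},s)\ne\emptyset\}$, the tangent space $\dot{\mathcal{P}}_P$ its closed linear span in $L^2(P)$. $\mathcal{H}$ is a real separable Hilbert space with orthonormal basis $(h_k)_{k\ge1}$ (if $\dim\mathcal{H}<\infty$, an orthonormal basis padded with zero vectors). $\nu$ is pathwise differentiable at $P$ if there is a continuous linear $\dot{\nu}_P:\dot{\mathcal{P}}_P\to\mathcal{H}$ with $\|\nu(P_\epsilon)-\nu(P)-\epsilon\dot{\nu}_P(s)\|_{\mathcal{H}}=o(\epsilon)$ for every $s$ in the tangent set and every submodel in $\mathscr{P}(P,\mathcal{P},s)$; $\dot{\nu}_P^*:\mathcal{H}\to\dot{\mathcal{P}}_P$ is its adjoint (efficient influence operator), with $\|\cdot\|_{\mathrm{op}}$ the operator norm. For a function $f$, $Pf=\int f\,dP$. $L^2(P;\mathcal{H})$ denotes Bochner measurable $f:\mathcal{Z}\to\mathcal{H}$ with $\int\|f\|_{\mathcal{H}}^2dP<\infty$, with that norm.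 *)

(* Defs.v *)
From HB Require Import structures.
From mathcomp Require Import all_boot all_order all_algebra.
From mathcomp Require Import all_classical all_reals all_analysis.

Set Implicit Arguments.
Unset Strict Implicit.
Unset Printing Implicit Defensive.

Import Order.TTheory GRing.Theory Num.Theory.
Import numFieldNormedType.Exports.

Local Open Scope classical_set_scope.
Local Open Scope ring_scope.

Section Polish.
Context {R : realType} {d : measure_display} {Z : measurableType d}.

Definition is_metric (dist : Z -> Z -> R) :=
  [/\ forall x y, 0 <= dist x y,
      forall x y, dist x y = 0 <-> x = y,
      forall x y, dist x y = dist y x &
      forall x y z, dist x z <= dist x y + dist y z].

Definition metric_open (dist : Z -> Z -> R) (A : set Z) :=
  forall x, A x -> exists2 r : R, 0 < r & forall y, dist x y < r -> A y.

Definition metric_complete (dist : Z -> Z -> R) :=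
  forall u : nat -> Z,
    (forall e : R, 0 < e -> exists N, forall m n,
        (N <= m)%N -> (N <= n)%N -> dist (u m) (u n) < e) ->
    exists l, forall e : R, 0 < e -> exists N, forall n,
        (N <= n)%N -> dist (u n) l < e.

Definition metric_separable (dist : Z -> Z -> R) :=
  exists u : nat -> Z, forall x (e : R), 0 < e -> exists n, dist x (u n) < e.

Definition polish_borel (dist : Z -> Z -> R) :=
  [/\ is_metric dist, metric_complete dist, metric_separable dist &
      (@measurable d Z) = <<s metric_open dist >>].

End Polish.

Section Hilbert.
Context {R : realType} {H : normedModType R}.

Definition inner_product (ip : H -> H -> R) :=
  [/\ forall x y, ip x y = ip y x,
      forall a x y z, ip (a *: x + y) z = a * ip x z + ip y z &
      forall x, ip x x = `|x| ^+ 2].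

(** [e] is an orthonormal basis, padded with zero vectors (after its
    last element) when [H] is finite-dimensional. *)
Definition padded_onb (ip : H -> H -> R) (e : nat -> H) :=
  [/\ forall j k, j != k -> ip (e j) (e k) = 0,
      forall k, e k = 0 \/ ip (e k) (e k) = 1,
      forall j k, (j <= k)%N -> e j = 0 -> e k = 0 &
      forall x, (forall k, ip x (e k) = 0) -> x = 0].

End Hilbert.

Section Model.
Context {R : realType} {d : measure_display} {Z : measurableType d}.

Definition density (lam Q : set Z -> \bar R) (f : Z -> R) :=
  [/\ measurable_fun setT f, forall z, 0 <= f z &
      forall A, measurable A -> Q A = (\int[lam]_(z in A) (f z)%:E)%E].

Definition dominated (lam : set Z -> \bar R) (M : set (probability Z R)) :=
  forall Q, M Q -> forall A, measurable A -> lam A = 0%E -> Q A = 0%E.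

Definition sqnorm (mu : set Z -> \bar R) (f : Z -> R) : \bar R :=
  (\int[mu]_z ((f z) ^+ 2)%:E)%E.

Definition L2 (mu : set Z -> \bar R) (f : Z -> R) :=
  measurable_fun setT f /\ (sqnorm mu f < +oo)%E.

Definition L2norm (mu : set Z -> \bar R) (f : Z -> R) : R :=
  Num.sqrt (fine (sqnorm mu f)).

(** [{Pe e : e in [0, delta)}] is a submodel of [M] through [P] with
    score [s] (differentiable in quadratic mean):
    || pe_e^{1/2} - p^{1/2} - e s p^{1/2} / 2 ||_{L2(lam)} = o(e). *)
Definition submodel (lam : set Z -> \bar R) (M : set (probability Z R))
    (P : probability Z R) (s : Z -> R)
    (Pe : R -> probability Z R) (delta : R) :=
  [/\ 0 < delta,
      (forall e, 0 <= e < delta -> M (Pe e)) &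
      exists (p : Z -> R) (pe : R -> Z -> R),
        [/\ density lam P p,
            (forall e, 0 <= e < delta -> density lam (Pe e) (pe e)) &
            forall eps : R, 0 < eps -> exists2 eta : R, 0 < eta &
              forall e, 0 < e -> e < eta -> e < delta ->
                (sqnorm lam (fun z => Num.sqrt (pe e z) - Num.sqrt (p z)
                      - e * s z * Num.sqrt (p z) / 2)%R
                 <= ((eps * e) ^+ 2)%R%:E)%E]].

Definition tangent_set (lam : set Z -> \bar R) (M : set (probability Z R))
    (P : probability Z R) (s : Z -> R) :=
  L2 P s /\ exists Pe delta, submodel lam M P s Pe delta.

Definition lin_span (S : set (Z -> R)) (f : Z -> R) :=
  exists n (c : 'I_n -> R) (g : 'I_n -> Z -> R),
    (forall i, S (g i)) /\ f = (fun z => \sum_(i < n) c i * g i z).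

Definition tangent_space (lam : set Z -> \bar R) (M : set (probability Z R))
    (P : probability Z R) (t : Z -> R) :=
  L2 P t /\ forall eps : R, 0 < eps -> exists g,
    lin_span (tangent_set lam M P) g /\
    (sqnorm P (fun z => t z - g z)%R <= (eps ^+ 2)%R%:E)%E.

Definition pathwise_derivative {H : normedModType R}
    (lam : set Z -> \bar R) (M : set (probability Z R))
    (P : probability Z R) (nu : probability Z R -> H)
    (D : (Z -> R) -> H) :=
  [/\ (forall a s t, tangent_space lam M P s -> tangent_space lam M P t ->
          D (fun z => a * s z + t z) = a *: D s + D t),
      (exists C : R, forall s, tangent_space lam M P s ->
          `|D s| <= C * L2norm P s) &
      (forall s, tangent_set lam M P s -> forall Pe delta,
          submodel lam M P s Pe delta ->
          forall eps : R, 0 < eps -> exists2 eta : R, 0 < eta &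
            forall e, 0 < e -> e < eta -> e < delta ->
              `|nu (Pe e) - nu P - e *: D s| <= eps * e)].

Definition adjoint {H : normedModType R} (ip : H -> H -> R)
    (lam : set Z -> \bar R) (M : set (probability Z R))
    (P : probability Z R) (D : (Z -> R) -> H) (A : H -> Z -> R) :=
  forall h, tangent_space lam M P (A h) /\
    forall s, tangent_space lam M P s ->
      ip (D s) h = fine (\int[P]_z (s z * A h z)%:E)%E.

Definition opnorm {H : normedModType R} (P : probability Z R)
    (A : H -> Z -> R) : R :=
  sup [set L2norm P (A h) | h in [set h : H | `|h| <= 1]].

Definition simple_fun_H {H : normedModType R} (f : Z -> H) :=
  exists n (B : 'I_n -> set Z) (x : 'I_n -> H),
    (forall i, measurable (B i)) /\
    f = (fun z => \sum_(i < n) (\1_(B i) z : R) *: x i).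

Definition bochner_measurable {H : normedModType R}
    (P : probability Z R) (f : Z -> H) :=
  exists fn : nat -> Z -> H, (forall n, simple_fun_H (fn n)) /\
    {ae P, forall z, fn ^~ z @ \oo --> f z}.

End Model.

(* Main.v *)
Require Import Defs.
From HB Require Import structures.
From mathcomp Require Import all_boot all_order all_algebra.
From mathcomp Require Import all_classical all_reals all_analysis.
From mathcomp Require measurable_realfun finmap.
From mathcomp Require Import ring lra.

Import Order.TTheory GRing.Theory Num.Theory.
Import numFieldNormedType.Exports.

Local Open Scope classical_set_scope.
Local Open Scope ring_scope.

Module H1.
Import measurable_realfun.
Set Implicit Arguments.
Unset Strict Implicit.
Unset Printing Implicit Defensive.
Import Order.TTheory GRing.Theory Num.Theory.
Import numFieldNormedType.Exports.
Local Open Scope classical_set_scope.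
Local Open Scope ring_scope.

Section Hilb.
Context {R : realType} {H : normedModType R} (ip : H -> H -> R).
Hypothesis hip : inner_product ip.

Lemma ipC x y : ip x y = ip y x. Proof. by case: hip. Qed.
Lemma ipxx x : ip x x = `|x| ^+ 2. Proof. by case: hip. Qed.
Lemma ipL a x y z : ip (a *: x + y) z = a * ip x z + ip y z. Proof. by case: hip. Qed.
Lemma ip0l z : ip 0 z = 0.
Proof.
have := ipL 1 0 0 z; rewrite scaler0 addr0 mul1r => h.
by apply: (@addrI _ (ip 0 z)); rewrite addr0 -h.
Qed.
Lemma ip0r z : ip z 0 = 0. Proof. by rewrite ipC ip0l. Qed.
Lemma ipDl x y z : ip (x + y) z = ip x z + ip y z.
Proof. by rewrite -{1}[x]scale1r ipL mul1r. Qed.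
Lemma ipZl a x z : ip (a *: x) z = a * ip x z.
Proof. by rewrite -[a *: x]addr0 ipL ip0l addr0. Qed.
Lemma ipDr x y z : ip z (x + y) = ip z x + ip z y.
Proof. by rewrite ipC ipDl !(ipC z). Qed.
Lemma ipZr a x z : ip z (a *: x) = a * ip z x.
Proof. by rewrite ipC ipZl ipC. Qed.
Lemma ipNl x z : ip (- x) z = - ip x z.
Proof. by rewrite -scaleN1r ipZl mulN1r. Qed.
Lemma ipBl x y z : ip (x - y) z = ip x z - ip y z.
Proof. by rewrite ipDl ipNl. Qed.
Lemma ipBr x y z : ip z (x - y) = ip z x - ip z y.
Proof. by rewrite ipC ipBl !(ipC z). Qed.
Lemma ip_suml n (F : 'I_n -> H) z : ip (\sum_(i < n) F i) z = \sum_(i < n) ip (F i) z.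
Proof.
elim/big_ind2: _ => //; first exact: ip0l.
by move=> x1 x2 y1 y2 <- <-; rewrite ipDl.
Qed.

Lemma CS x y : `|ip x y| <= `|x| * `|y|.
Proof.
have [->|y0] := eqVneq y 0; first by rewrite ip0r normr0 normr0 mulr0.
set p := ip x y; set a := `|x|; set b := `|y|.
have b0 : 0 < b by rewrite normr_gt0.
have := ipxx (b ^+ 2 *: x - p *: y).
rewrite ipBl !ipBr !ipZl !ipZr ipxx (ipC y x) ipxx -/p -/a -/b => E.
have h : 0 <= b ^+ 2 * (a ^+ 2 * b ^+ 2 - p ^+ 2).
  have : 0 <= `|b ^+ 2 *: x - p *: y| ^+ 2 by apply: sqr_ge0.
  rewrite -E; congr (0 <= _); ring.
have h2 : p ^+ 2 <= (a * b) ^+ 2.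
  rewrite pmulr_rge0 ?exprn_gt0 // subr_ge0 in h; by rewrite exprMn.
rewrite -ler_sqr; last 2 first.
- by rewrite qualifE /= normr_ge0.
- by rewrite qualifE /= mulr_ge0 // normr_ge0.
by rewrite real_normK // num_real.
Qed.
End Hilb.

End H1.
Import H1.

Module H2.
Import measurable_realfun.
Set Implicit Arguments.
Unset Strict Implicit.
Unset Printing Implicit Defensive.
Import Order.TTheory GRing.Theory Num.Theory.
Import numFieldNormedType.Exports.
Local Open Scope classical_set_scope.
Local Open Scope ring_scope.

Section Pyth.
Context {R : realType} {H : normedModType R} (ip : H -> H -> R) (hb : nat -> H).
Hypothesis hip : inner_product ip.
Hypothesis hon : padded_onb ip hb.

Lemma ip_sum I (r : seq I) (P : pred I) (F : I -> H) z :
  ip (\sum_(i <- r | P i) F i) z = \sum_(i <- r | P i) ip (F i) z.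
Proof.
elim/big_ind2: _ => //; first exact: (ip0l hip).
by move=> x1 x2 y1 y2 <- <-; rewrite (ipDl hip).
Qed.

Lemma orth j k : j != k -> ip (hb j) (hb k) = 0.
Proof. by case: hon => + _ _ _; apply. Qed.

Lemma ee_ge0 k : 0 <= ip (hb k) (hb k).
Proof. by rewrite (ipxx hip) sqr_ge0. Qed.

Lemma ee_le1 k : ip (hb k) (hb k) <= 1.
Proof.
by case: hon => _ /(_ k) [->|->] _ _ //; rewrite (ip0l hip).
Qed.

Lemma pyth (c : nat -> R) m n :
  `|\sum_(m <= k < n) c k *: hb k| ^+ 2 = \sum_(m <= k < n) c k ^+ 2 * ip (hb k) (hb k).
Proof.
elim: n => [|n IH]; first by rewrite !big_geq // normr0 expr0n.
have [mn|nm] := leqP m n; last by rewrite !big_geq // normr0 expr0n.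
rewrite !big_nat_recr //= -IH -!(ipxx hip).
have o : ip (\sum_(m <= k < n) c k *: hb k) (hb n) = 0.
  rewrite ip_sum big_nat_cond big1 // => k /andP[/andP[_ kn] _].
  by rewrite (ipZl hip) orth ?mulr0 // ltn_eqF.
rewrite !(ipDl hip) !(ipDr hip) !(ipZl hip) !(ipZr hip) o (ipC hip (hb n)) o.
rewrite mulr0 !addr0 add0r; congr (_ + _); rewrite mulrA; ring.
Qed.

End Pyth.

End H2.
Import H2.

Module H3.
Import measurable_realfun.
Set Implicit Arguments.
Unset Strict Implicit.
Unset Printing Implicit Defensive.
Import Order.TTheory GRing.Theory Num.Theory.
Import numFieldNormedType.Exports.
Local Open Scope classical_set_scope.
Local Open Scope ring_scope.

Section Abound.
Context {R : realType} {d : measure_display} {Z : measurableType d}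
  {H : completeNormedModType R} (ip : H -> H -> R) (hb : nat -> H)
  (lam : {measure set Z -> \bar R}) (M : set (probability Z R))
  (nu : probability Z R -> H) (P : probability Z R)
  (D : (Z -> R) -> H) (A : H -> Z -> R).
Hypothesis hip : inner_product ip.
Hypothesis hon : padded_onb ip hb.
Hypothesis hpd : pathwise_derivative lam M P nu D.
Hypothesis hadj : adjoint ip lam M P D A.

Lemma A_L2 h : L2 P (A h).
Proof. by case: (hadj h) => -[]. Qed.

Lemma mA h : measurable_fun setT (A h).
Proof. by case: (A_L2 h). Qed.

Lemma sqnorm_ge0 f : (0 <= sqnorm P f)%E.
Proof. by apply: integral_ge0 => z _; rewrite lee_fin sqr_ge0. Qed.

Lemma sqnormA_fin h : sqnorm P (A h) = (fine (sqnorm P (A h)))%:E.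
Proof.
rewrite fineK //; rewrite ge0_fin_numE ?sqnorm_ge0 //; by case: (A_L2 h).
Qed.

Lemma L2normA_sqr h : L2norm P (A h) ^+ 2 = fine (sqnorm P (A h)).
Proof. by rewrite /L2norm sqr_sqrtr // fine_ge0 // sqnorm_ge0. Qed.

Lemma L2norm_ge0 f : 0 <= L2norm P f.
Proof. exact: sqrtr_ge0. Qed.

Lemma A_bound : exists C, 0 <= C /\ forall h, L2norm P (A h) <= C * `|h|.
Proof.
case: hpd => _ [C0 hC0] _.
exists (Num.max C0 0); split; first by rewrite le_max lexx orbT.
move=> h; set L := L2norm P (A h).
have tA : tangent_space lam M P (A h) by case: (hadj h).
have e1 : L ^+ 2 = ip (D (A h)) h.
  rewrite L2normA_sqr; case: (hadj h) => _ /(_ _ tA) ->.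
  by congr fine; apply: eq_integral => z _; rewrite expr2.
have L0 : 0 <= L by exact: L2norm_ge0.
have e2 : L ^+ 2 <= Num.max C0 0 * L * `|h|.
  rewrite e1; apply: le_trans (ler_norm _) _.
  apply: le_trans (CS hip _ _) _; apply: ler_wpM2r => //.
  apply: le_trans (hC0 _ tA) _; apply: ler_wpM2r => //.
  by rewrite le_max lexx.
have [L00|Lpos] := eqVneq L 0.
  by rewrite L00 mulr_ge0 // le_max lexx orbT.
have Lp : 0 < L by rewrite lt_def Lpos L0.
by rewrite -(ler_pM2l Lp) -expr2 (le_trans e2) // mulrCA mulrA.
Qed.

Lemma opnorm_hasub : has_ubound [set L2norm P (A h) | h in [set h : H | `|h| <= 1]].
Proof.
case: A_bound => C [C0 hC]; exists C => _ [h /= h1 <-].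
by apply: le_trans (hC h) _; rewrite ler_piMr.
Qed.

Lemma opnorm_ub h : `|h| <= 1 -> L2norm P (A h) <= opnorm P A.
Proof. by move=> h1; apply: (ub_le_sup opnorm_hasub); exists h. Qed.

Lemma opnorm_ge0 : 0 <= opnorm P A.
Proof. by apply: le_trans (opnorm_ub (h:=0) _); [exact: L2norm_ge0|rewrite normr0]. Qed.

Lemma hb_le1 k : `|hb k| <= 1.
Proof.
have := ee_le1 hip hon k; rewrite (ipxx hip) => h.
by rewrite -(@ler_pXn2r _ 2) // ?nnegrE // expr1n.
Qed.

Definition Ik k := fine (sqnorm P (A (hb k))).

Lemma Ik_ge0 k : 0 <= Ik k.
Proof. by rewrite /Ik fine_ge0 // sqnorm_ge0. Qed.

Lemma Ik_le k : Ik k <= opnorm P A ^+ 2.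
Proof.
rewrite /Ik -L2normA_sqr ler_pXn2r ?nnegrE ?L2norm_ge0 ?opnorm_ge0 //.
exact/opnorm_ub/hb_le1.
Qed.

Lemma Ik_ee k : Ik k * ip (hb k) (hb k) = Ik k.
Proof.
case: hon => _ /(_ k) [h0|->] _ _; last by rewrite mulr1.
case: A_bound => C [C0 /(_ (hb k))]; rewrite h0 normr0 mulr0 => hL.
have : L2norm P (A 0) = 0 by apply/le_anti; rewrite hL L2norm_ge0.
by rewrite /Ik h0 -L2normA_sqr => ->; rewrite expr0n /= mul0r.
Qed.

Lemma sqnormA k : sqnorm P (A (hb k)) = (Ik k)%:E.
Proof. exact: sqnormA_fin. Qed.

End Abound.

End H3.
Import H3.

Module H4.
Import measurable_realfun.
Set Implicit Arguments.
Unset Strict Implicit.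
Unset Printing Implicit Defensive.
Import Order.TTheory GRing.Theory Num.Theory.
Import numFieldNormedType.Exports.
Local Open Scope classical_set_scope.
Local Open Scope ring_scope.

Section Tannery.
Context {R : realType}.

Lemma cvg_sum_fin (u : nat -> nat -> R) K :
  (forall k, u ^~ k @ \oo --> (0:R)) ->
  (fun n => \sum_(k < K) u n k) @ \oo --> (0:R).
Proof.
move=> hu; elim: K => [|K IH].
  by under eq_fun do rewrite big_ord0; exact: cvg_cst.
have -> : (fun n => \sum_(k < K.+1) u n k) = (fun n => \sum_(k<K) u n k) + u ^~ K.
  by apply/funext => n; rewrite big_ord_recr.
suff : ((fun n => \sum_(k<K) u n k) + u ^~ K) @ \oo --> (0 + 0 : R) by rewrite addr0.
exact: cvgD.
Qed.

Lemma tannery (u : nat -> nat -> R) (v : nat -> R) :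
  (forall n k, 0 <= u n k <= v k) -> cvgn (series v) ->
  (forall k, u ^~ k @ \oo --> (0:R)) ->
  (fun n => \sum_(k < n) u n k) @ \oo --> (0:R).
Proof.
move=> huv cv hu; apply/cvgrPdist_lt => e e0.
have v0 k : 0 <= v k by case/andP: (huv 0%N k) => a b; exact: le_trans b.
have nd : {homo series v : n m / (n <= m)%N >-> n <= m}.
  by apply: nondecreasing_series => n _ _; exact: v0.
set Lv := limn (series v).
have hLv n : series v n <= Lv by exact: nondecreasing_cvgn_le.
have [K hK] : exists K, Lv - series v K < e / 2.
  have := cv; move/cvgrPdist_lt => /(_ (e / 2)) [].
    by rewrite divr_gt0.
  move=> N _ hN; exists N; have := hN N (leqnn N) => /=.
  by rewrite ger0_norm // subr_ge0.
have := cvg_sum_fin K hu; move/cvgrPdist_lt => /(_ (e / 2)) [].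
  by rewrite divr_gt0.
move=> N _ hN; exists (maxn N K) => // n /= hn.
have nN : (N <= n)%N by rewrite (leq_trans (leq_maxl _ _) hn).
have nK : (K <= n)%N by rewrite (leq_trans (leq_maxr _ _) hn).
have s0 : 0 <= \sum_(k < n) u n k.
  by apply: sumr_ge0 => k _; case/andP: (huv n k).
rewrite sub0r normrN ger0_norm //.
have := hN n nN; rewrite /= sub0r normrN => h1.
rewrite -(big_mkord xpredT (u n)) (@big_cat_nat _ _ _ K 0 n) //=.
rewrite big_mkord.
have h2 : \sum_(K <= k < n) u n k <= Lv - series v K.
  apply: (@le_trans _ _ (\sum_(K <= k < n) v k)).
    by apply: ler_sum => k _; case/andP: (huv n k).
  have := sub_series v K n; rewrite nK => <-.
  by rewrite lerB.
have h3 : \sum_(k < K) u n k <= `|\sum_(k < K) u n k| by exact: ler_norm.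
have : e = e / 2 + e / 2 by rewrite -splitr.
move=> ->; apply: le_lt_trans (lerD (le_refl _) h2) _.
by apply: ltr_leD => //; [exact: le_lt_trans h3 h1 | exact: ltW].
Qed.

End Tannery.

End H4.
Import H4.

Module H5.
Import measurable_realfun.
Import finmap.
Set Implicit Arguments.
Unset Strict Implicit.
Unset Printing Implicit Defensive.
Import Order.TTheory GRing.Theory Num.Theory.
Import numFieldNormedType.Exports.
Import HBSimple HBNNSimple.
Local Open Scope classical_set_scope.
Local Open Scope ring_scope.

Section SimpleH.
Context {R : realType} {d : measure_display} {Z : measurableType d}
  {H : normedModType R}.

Definition sfH (f : Z -> H) := exists s : seq (set Z * H),
  (forall p, List.In p s -> measurable p.1) /\
  f = fun z => \sum_(p <- s) (\1_(p.1) z : R) *: p.2.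

Lemma sfH0 : sfH (fun _ => 0).
Proof. by exists [::]; split => //; apply/funext => z; rewrite big_nil. Qed.

Lemma sfHD f g : sfH f -> sfH g -> sfH (fun z => f z + g z).
Proof.
move=> [s1 [m1 e1]] [s2 [m2 e2]]; rewrite e1 e2; exists (s1 ++ s2); split.
  by move=> p /(List.in_app_or s1 s2 p) [h|h]; [exact: m1|exact: m2].
by apply/funext => z; rewrite big_cat.
Qed.

Lemma sfH_sum (I : Type) (r : seq I) (F : I -> Z -> H) :
  (forall i, sfH (F i)) -> sfH (fun z => \sum_(i <- r) F i z).
Proof.
move=> hF; elim: r => [|i r IH].
  by under eq_fun do rewrite big_nil; exact: sfH0.
under eq_fun do rewrite big_cons; exact: sfHD.
Qed.

Lemma sfH_ind (B : set Z) (x : H) : measurable B -> sfH (fun z => (\1_B z : R) *: x).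
Proof.
move=> mB; exists [:: (B, x)]; split; first by move=> p [<-|].
by apply/funext => z; rewrite big_seq1.
Qed.

Lemma sfH_sfun (s : {sfun Z >-> R}) (B : set Z) (x : H) : measurable B ->
  sfH (fun z => (\1_B z * s z) *: x).
Proof.
move=> mB.
set S := fset_set (s @` setT).
have -> : (fun z => (\1_B z * s z) *: x) =
    (fun z => \sum_(i < #|`S|) (\1_(B `&` s @^-1` [set S`_i]) z : R) *: (S`_i *: x)).
  apply/funext => z; rewrite (fimfunEord s) mulr_sumr scaler_suml.
  apply: eq_bigr => i _; rewrite indicI /= scalerA; congr (_ *: _).
  by rewrite /S; ring.
apply: sfH_sum => i; apply: sfH_ind; apply: measurableI => //.
Qed.

Lemma nth_In (T : Type) (x0 : T) (s : seq T) i : (i < size s)%N -> List.In (nth x0 s i) s.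
Proof.
elim: s i => [|a s IH] [|i] //= hi; first by left.
by right; apply: IH.
Qed.

Lemma sfH_simple f : sfH f -> simple_fun_H f.
Proof.
move=> [s [ms ->]]; set x0 := (@set0 Z, (0 : H)).
exists (size s), (fun i => (nth x0 s i).1), (fun i => (nth x0 s i).2); split.
  by move=> i; apply: ms; apply: nth_In.
by apply/funext => z; rewrite (big_nth x0) big_mkord.
Qed.

End SimpleH.

End H5.
Import H5.

Module H6.
Import measurable_realfun.
Set Implicit Arguments.
Unset Strict Implicit.
Unset Printing Implicit Defensive.
Import Order.TTheory GRing.Theory Num.Theory.
Import numFieldNormedType.Exports.
Local Open Scope classical_set_scope.
Local Open Scope ring_scope.

Lemma nneseries_EFin {R : realType} (u : nat -> R) : (forall k, 0 <= u k) ->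
  cvgn (series u) -> (\sum_(k <oo) (u k)%:E)%E = (limn (series u))%:E.
Proof.
move=> u0 cu; rewrite -EFin_lim //; congr (limn _); apply/funext => n.
by rewrite /= sumEFin.
Qed.

Section Main1.
Context {R : realType} {d : measure_display} {Z : measurableType d}
  {H : completeNormedModType R} (ip : H -> H -> R) (hb : nat -> H)
  (lam : {measure set Z -> \bar R}) (M : set (probability Z R))
  (nu : probability Z R -> H) (P : probability Z R)
  (D : (Z -> R) -> H) (A : H -> Z -> R) (beta : nat -> R).
Hypothesis hip : inner_product ip.
Hypothesis hon : padded_onb ip hb.
Hypothesis hpd : pathwise_derivative lam M P nu D.
Hypothesis hadj : adjoint ip lam M P D A.
Hypothesis hbeta : forall k, 0 <= beta k <= 1.
Hypothesis hcvg : cvg (series (fun k => beta k ^+ 2) @ \oo).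

Definition cc k z := beta k * A (hb k) z.
Definition ee k := ip (hb k) (hb k).
Definition ww k z := cc k z ^+ 2 * ee k.
Definition GG z := (\sum_(k <oo) (ww k z)%:E)%E.
Definition Zb := [set z | (GG z < +oo)%E].
Definition Lb := limn (series (fun k => beta k ^+ 2)).

Lemma ww_ge0 k z : 0 <= ww k z.
Proof. by rewrite mulr_ge0 ?sqr_ge0 // (ee_ge0 hb hip). Qed.

Lemma mcc k : measurable_fun setT (cc k).
Proof. by apply: measurable_funM => //; exact: (mA hadj). Qed.

Lemma mww k : measurable_fun setT (ww k).
Proof. by apply: measurable_funM => //; apply: measurable_funM; exact: mcc. Qed.

Lemma mGG : measurable_fun setT GG.
Proof.
apply: ge0_emeasurable_sum.
  by move=> k x _ _; rewrite lee_fin ww_ge0.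
by move=> k _; apply/measurable_EFinP; exact: mww.
Qed.

Lemma mZb : measurable Zb.
Proof.
have -> : Zb = setT `&` [set z | (GG z < cst (+oo%E : \bar R) z)%E] by rewrite setTI.
exact: (measurable_lte measurableT mGG (measurable_cst (+oo%E : \bar R))).
Qed.

Lemma intGG : (\int[P]_z GG z = \sum_(k <oo) (beta k ^+ 2 * Ik hb P A k)%:E)%E.
Proof.
rewrite /GG integral_nneseries //; last 2 first.
- by move=> k; apply/measurable_EFinP; exact: mww.
- by move=> k x _; rewrite lee_fin ww_ge0.
apply: eq_eseriesr => k _.
have -> : (fun z => (ww k z)%:E) = (fun z => (beta k ^+ 2 * ee k)%:E * ((A (hb k) z) ^+ 2)%:E)%E.
  by apply/funext => z; rewrite -EFinM /ww /cc; congr EFin; ring.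
rewrite ge0_integralZl_EFin //; last 3 first.
- by move=> z _; rewrite lee_fin sqr_ge0.
- apply/measurable_EFinP; apply: measurable_funM; exact: (mA hadj).
- by rewrite mulr_ge0 ?sqr_ge0 // (ee_ge0 hb hip).
have := sqnormA hb hadj k; rewrite /sqnorm => ->.
by rewrite -EFinM -mulrA (mulrC (ee k)) (Ik_ee hip hon hpd hadj).
Qed.

Lemma Sig_le : (\sum_(k <oo) (beta k ^+ 2 * Ik hb P A k)%:E <=
   (opnorm P A ^+ 2 * Lb)%:E)%E.
Proof.
have b0 k : 0 <= beta k ^+ 2 by exact: sqr_ge0.
apply: (@le_trans _ _ (\sum_(k <oo) ((opnorm P A ^+ 2)%:E * (beta k ^+ 2)%:E))%E).
  apply: lee_nneseries.
    by move=> k _ _; rewrite lee_fin mulr_ge0 // (Ik_ge0 hb P A).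
  by move=> k _; rewrite -EFinM lee_fin mulrC ler_wpM2r // (Ik_le hip hon hpd hadj).
rewrite nneseriesZl; last by move=> k _; rewrite lee_fin.
by rewrite nneseries_EFin // -EFinM.
Qed.

End Main1.

End H6.
Import H6.

Module H7.
Import measurable_realfun.
Set Implicit Arguments.
Unset Strict Implicit.
Unset Printing Implicit Defensive.
Import Order.TTheory GRing.Theory Num.Theory.
Import numFieldNormedType.Exports.
Local Open Scope classical_set_scope.
Local Open Scope ring_scope.

Lemma lim_dvg {R : realType} {H : normedModType R} (u : nat -> H) :
  ~ (exists l : H, u @ \oo --> l) -> limn u = point.
Proof.
move=> nF; rewrite /lim /lim_in /xget; case: pselect => // -[l Fl].
by exfalso; apply: nF; exists l; apply/asboolP.
Qed.

Section Main2.
Context {R : realType} {d : measure_display} {Z : measurableType d}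
  {H : completeNormedModType R} (ip : H -> H -> R) (hb : nat -> H)
  (lam : {measure set Z -> \bar R}) (M : set (probability Z R))
  (nu : probability Z R -> H) (P : probability Z R)
  (D : (Z -> R) -> H) (A : H -> Z -> R) (beta : nat -> R).
Hypothesis hip : inner_product ip.
Hypothesis hon : padded_onb ip hb.
Hypothesis hpd : pathwise_derivative lam M P nu D.
Hypothesis hadj : adjoint ip lam M P D A.
Hypothesis hbeta : forall k, 0 <= beta k <= 1.
Hypothesis hcvg : cvg (series (fun k => beta k ^+ 2) @ \oo).

Local Notation cc := (cc hb A beta).
Local Notation ww := (ww ip hb A beta).
Local Notation GG := (GG ip hb A beta).
Local Notation Zb := (Zb ip hb A beta).
Local Notation Sig := (\sum_(k <oo) (beta k ^+ 2 * Ik hb P A k)%:E)%E.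

Let ww0 k z : 0 <= ww k z. Proof. exact: (ww_ge0 hb A beta hip). Qed.
Let mGG' : measurable_fun setT GG. Proof. exact: (mGG hb beta hip hadj). Qed.
Let mZb' : measurable Zb. Proof. exact: (mZb hb beta hip hadj). Qed.
Let intGG' : (\int[P]_z GG z = Sig)%E. Proof. exact: (intGG beta hip hon hpd hadj). Qed.

Lemma Sig_fin : (Sig < +oo)%E.
Proof. by apply: le_lt_trans (Sig_le hip hon hpd hadj hcvg) _; exact: ltry. Qed.

Lemma intGG_fin : (\int[P]_z GG z < +oo)%E.
Proof. by rewrite intGG'; exact: Sig_fin. Qed.

Lemma PZb : P Zb = 1%E.
Proof.
have iG : P.-integrable setT GG.
  apply/integrableP; split; first exact: mGG'.
  rewrite (eq_integral GG); first exact: intGG_fin.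
  by move=> z _; rewrite gee0_abs //; apply: nneseries_ge0 => k _ _; rewrite lee_fin ww0.
have [N [mN PN sub]] := integrable_ae measurableT iG.
have PC : P (~` Zb) = 0%E.
  apply/le_anti; rewrite measure_ge0 andbT -PN le_measure ?inE //.
  - exact/measurableC/mZb'.
  - move=> z nZ; apply: sub => /= /(_ I); rewrite ge0_fin_numE //.
    by apply: nneseries_ge0 => k _ _; rewrite lee_fin ww0.
have := probability_setC P (measurableC mZb').
by rewrite setCK PC sube0.
Qed.

Lemma ww_cvg z : Zb z -> cvgn (series (ww ^~ z)).
Proof. by move=> Zz; apply: nnseries_is_cvg => // k; exact: ww0. Qed.

Lemma GG_lim z : Zb z -> GG z = (limn (series (ww ^~ z)))%:E.
Proof. by move=> Zz; rewrite /GG nneseries_EFin //; exact: ww_cvg. Qed.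

Definition SS z := series (fun k => cc k z *: hb k).

Lemma SS_norm z m n :
  `|\sum_(m <= k < n) cc k z *: hb k| ^+ 2 = \sum_(m <= k < n) ww k z.
Proof. by rewrite (pyth hip hon). Qed.

Lemma SS_normn z n : `|SS z n| ^+ 2 = series (ww ^~ z) n.
Proof. exact: SS_norm. Qed.

Lemma SS_cvg z : Zb z -> cvg (SS z @ \oo).
Proof.
move=> Zz; have cw := ww_cvg Zz.
have hw : forall e : R, 0 < e -> \forall n \near (\oo, \oo), `|\sum_(n.1 <= k < n.2) ww k z| < e.
  by apply/cauchy_seriesP/cauchy_cvgP.
apply/cauchy_cvgP/cauchy_seriesP => e e0.
have := hw (e ^+ 2) (exprn_gt0 2 e0); apply: filterS => n hn.
have h2 : `|\sum_(n.1 <= k < n.2) cc k z *: hb k| ^+ 2 < e ^+ 2.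
  by rewrite SS_norm; exact: le_lt_trans (ler_norm _) hn.
by move: h2; rewrite ltr_pXn2r // nnegrE ?normr_ge0 // (ltW e0). Qed.

End Main2.

End H7.
Import H7.

Module H8.
Import measurable_realfun.
Set Implicit Arguments.
Unset Strict Implicit.
Unset Printing Implicit Defensive.
Import Order.TTheory GRing.Theory Num.Theory.
Import numFieldNormedType.Exports.
Local Open Scope classical_set_scope.
Local Open Scope ring_scope.

Section Main3.
Context {R : realType} {d : measure_display} {Z : measurableType d}
  {H : completeNormedModType R} (ip : H -> H -> R) (hb : nat -> H)
  (lam : {measure set Z -> \bar R}) (M : set (probability Z R))
  (nu : probability Z R -> H) (P : probability Z R)
  (D : (Z -> R) -> H) (A : H -> Z -> R) (beta : nat -> R).
Hypothesis hip : inner_product ip.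
Hypothesis hon : padded_onb ip hb.
Hypothesis hpd : pathwise_derivative lam M P nu D.
Hypothesis hadj : adjoint ip lam M P D A.
Hypothesis hbeta : forall k, 0 <= beta k <= 1.
Hypothesis hcvg : cvg (series (fun k => beta k ^+ 2) @ \oo).

Local Notation cc := (cc hb A beta).
Local Notation ww := (ww ip hb A beta).
Local Notation GG := (GG ip hb A beta).
Local Notation Zb := (Zb ip hb A beta).
Local Notation SS := (SS hb A beta).
Local Notation Sig := (\sum_(k <oo) (beta k ^+ 2 * Ik hb P A k)%:E)%E.

Let ww0 k z : 0 <= ww k z. Proof. exact: (ww_ge0 hb A beta hip). Qed.
Let mGG' : measurable_fun setT GG. Proof. exact: (mGG hb beta hip hadj). Qed.
Let mZb' : measurable Zb. Proof. exact: (mZb hb beta hip hadj). Qed.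
Let intGG' : (\int[P]_z GG z = Sig)%E. Proof. exact: (intGG beta hip hon hpd hadj). Qed.
Let SS_cvg' z : Zb z -> cvg (SS z @ \oo). Proof. exact: (SS_cvg hip hon). Qed.
Let SS_normn' z n : `|SS z n| ^+ 2 = series (ww ^~ z) n. Proof. exact: (SS_normn A beta hip hon). Qed.
Let GG_lim' z : Zb z -> GG z = (limn (series (ww ^~ z)))%:E.
Proof. exact: (GG_lim hip). Qed.

Definition phi z := limn (SS z).

Lemma SS_to z : Zb z -> SS z @ \oo --> phi z.
Proof. exact: SS_cvg'. Qed.

Lemma sq_cvg (u : nat -> H) l : u @ \oo --> l -> (fun n => `|u n| ^+ 2) @ \oo --> `|l| ^+ 2.
Proof.
move=> hu.
have -> : (fun n => `|u n| ^+ 2) = (fun n => `|u n|) \* (fun n => `|u n|).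
  by apply/funext => n; rewrite /= expr2.
rewrite expr2; exact: cvgM (cvg_norm hu) (cvg_norm hu).
Qed.

Lemma phi_norm z : Zb z -> `|phi z| ^+ 2 = limn (series (ww ^~ z)).
Proof.
move=> Zz; have := sq_cvg (SS_to Zz).
under eq_fun do rewrite SS_normn'.
by move/(cvg_lim (@Rhausdorff R)) => ->.
Qed.

Lemma phi_off z : ~ Zb z -> phi z = point.
Proof.
move=> nZ; apply: lim_dvg => -[l hl]; apply: nZ.
have cw : cvgn (series (ww ^~ z)).
  apply/cvg_ex; exists (`|l| ^+ 2); have := sq_cvg hl.
  by under eq_fun do rewrite SS_normn'.
rewrite /Zb /= /H6.GG nneseries_EFin //; exact: ltry.
Qed.

Lemma mPhi : measurable_fun setT (fun z => `|phi z| ^+ 2).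
Proof.
pose h n z := \1_Zb z * series (ww ^~ z) n + (1 - \1_Zb z) * `|point : H| ^+ 2.
apply: (measurable_fun_cvg (h := h)).
  move=> n; apply: measurable_funD; apply: measurable_funM.
  - exact: measurable_indic.
  - by apply: measurable_sum => k; exact: (mww hb beta hadj).
  - by apply: measurable_funB => //; exact: measurable_indic.
  - exact: measurable_cst.
move=> z _; have [Zz|nZ] := pselect (Zb z).
  have -> : (fun n => h n z) = series (ww ^~ z).
    by apply/funext => n; rewrite /h indicE mem_set // subrr mul0r addr0 mul1r.
  by rewrite phi_norm //; exact: (ww_cvg hip Zz).
have -> : (fun n => h n z) = (fun=> `|point : H| ^+ 2).
  by apply/funext => n; rewrite /h indicE memNset // subr0 mul0r add0r mul1r.
by rewrite phi_off //; exact: cvg_cst.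
Qed.

Lemma int_phi : (\int[P]_z (`|phi z| ^+ 2)%:E = Sig)%E.
Proof.
rewrite -intGG'; apply: ge0_ae_eq_integral => //.
all: try (exact/measurable_EFinP/mPhi).
all: try (by move=> z _; rewrite lee_fin sqr_ge0).
all: try (by move=> z _; apply: nneseries_ge0 => k _ _; rewrite lee_fin).
exists (~` Zb); split.
- exact: measurableC.
- have := probability_setC P mZb'; rewrite (PZb hip hon hpd hadj hcvg).
  by rewrite subee.
- move=> z /= h Zz; apply: h => _.
  by rewrite phi_norm ?GG_lim'.
Qed.

End Main3.

End H8.
Import H8.

Module H9.
Import measurable_realfun.
Set Implicit Arguments.
Unset Strict Implicit.
Unset Printing Implicit Defensive.
Import Order.TTheory GRing.Theory Num.Theory.
Import numFieldNormedType.Exports.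
Import HBSimple HBNNSimple.
Local Open Scope classical_set_scope.
Local Open Scope ring_scope.

Lemma ip_cvg {R : realType} {H : normedModType R} (ip : H -> H -> R) :
  inner_product ip -> forall (u : nat -> H) l h,
  u @ \oo --> l -> (fun n => ip h (u n)) @ \oo --> ip h l.
Proof.
move=> hip u l h hu; apply/cvgrPdist_lt => e e0.
set a := `|h|; have a0 : 0 <= a by exact: normr_ge0.
set del := e / (a + 1).
have dp : 0 < del by rewrite divr_gt0 // ltr_wpDl.
have ed : (a + 1) * del = e by rewrite /del mulrC divfK // gt_eqF // ltr_wpDl.
move/cvgrPdist_lt : hu => /(_ del dp) hu; apply: filterS hu => n hn.
rewrite -(ipBr hip); apply: le_lt_trans (CS hip _ _) _.
have x0 : 0 <= `|l - u n| by exact: normr_ge0.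
rewrite -/a; nra.
Qed.

Lemma sq_bound {R : realType} (a b c : R) : 0 <= a <= Num.max c 0 ->
  0 <= b <= Num.max (- c) 0 -> (a - b - c) ^+ 2 <= c ^+ 2.
Proof.
move=> /andP[a0 ac] /andP[b0 bc]; move: ac bc; rewrite !maxEle.
by case: (lerP c 0) => h1; case: (lerP (-c) 0) => h2 ac bc; nra.
Qed.

End H9.
Import H9.

Module H10.
Import measurable_realfun.
Set Implicit Arguments.
Unset Strict Implicit.
Unset Printing Implicit Defensive.
Import Order.TTheory GRing.Theory Num.Theory.
Import numFieldNormedType.Exports.
Import HBSimple HBNNSimple.
Local Open Scope classical_set_scope.
Local Open Scope ring_scope.

Lemma mmax {R : realType} {d} {Z : measurableType d} (f : Z -> R) :
  measurable_fun setT f -> measurable_fun setT (fun z => (Num.max (f z) 0)%:E).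
Proof.
move=> mf; apply/measurable_EFinP.
exact: (measurable_maxr mf (measurable_cst (0:R))).
Qed.

Lemma max_sub {R : realType} (c : R) : Num.max c 0 - Num.max (- c) 0 = c.
Proof. by rewrite !maxEle; case: (lerP c 0) => h1; case: (lerP (-c) 0) => h2; lra. Qed.

Section Boch.
Context {R : realType} {d : measure_display} {Z : measurableType d}
  {H : completeNormedModType R} (ip : H -> H -> R) (hb : nat -> H)
  (lam : {measure set Z -> \bar R}) (M : set (probability Z R))
  (nu : probability Z R -> H) (P : probability Z R)
  (D : (Z -> R) -> H) (A : H -> Z -> R) (beta : nat -> R).
Hypothesis hip : inner_product ip.
Hypothesis hon : padded_onb ip hb.
Hypothesis hpd : pathwise_derivative lam M P nu D.
Hypothesis hadj : adjoint ip lam M P D A.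
Hypothesis hbeta : forall k, 0 <= beta k <= 1.
Hypothesis hcvg : cvg (series (fun k => beta k ^+ 2) @ \oo).

Local Notation cc := (cc hb A beta).
Local Notation ww := (ww ip hb A beta).
Local Notation GG := (GG ip hb A beta).
Local Notation Zb := (Zb ip hb A beta).
Local Notation SS := (SS hb A beta).
Local Notation phi := (phi hb A beta).

Let ww0 k z : 0 <= ww k z. Proof. exact: (ww_ge0 hb A beta hip). Qed.
Let mZb' : measurable Zb. Proof. exact: (mZb hb beta hip hadj). Qed.
Let mcc' k : measurable_fun setT (cc k). Proof. exact: (mcc hb beta hadj). Qed.

Lemma PC : P (~` Zb) = 0%E.
Proof.
have := probability_setC P mZb'; rewrite (PZb hip hon hpd hadj hcvg).
by rewrite subee.
Qed.

Let mpk k : measurable_fun setT (fun z => (Num.max (cc k z) 0)%:E).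
Proof. exact: mmax. Qed.
Let mmk k : measurable_fun setT (fun z => (Num.max (- cc k z) 0)%:E).
Proof. apply: mmax; exact: (measurableT_comp (@oppr_measurable R setT) (mcc' k)). Qed.

Definition apk k n := nnsfun_approx measurableT (mpk k) n.
Definition amk k n := nnsfun_approx measurableT (mmk k) n.

Definition fn n z := \sum_(k < n)
  ((\1_Zb z * apk k n z) *: hb k + (\1_Zb z * amk k n z) *: (- hb k)).

Lemma fn_simple n : simple_fun_H (fn n).
Proof.
apply: sfH_simple; apply: sfH_sum => k; apply: sfHD; exact: sfH_sfun.
Qed.

Lemma apk_b k n z : 0 <= apk k n z <= Num.max (cc k z) 0.
Proof.
rewrite fun_ge0 /= -lee_fin /apk nnsfun_approxE.
by apply: le_approx => // x _; rewrite lee_fin le_max lexx orbT.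
Qed.

Lemma amk_b k n z : 0 <= amk k n z <= Num.max (- cc k z) 0.
Proof.
rewrite fun_ge0 /= -lee_fin /amk nnsfun_approxE.
by apply: le_approx => // x _; rewrite lee_fin le_max lexx orbT.
Qed.

Lemma apk_cvg k z : (fun n => apk k n z) @ \oo --> Num.max (cc k z) 0.
Proof.
apply: (fine_cvg (f := fun n => (apk k n z)%:E)).
by apply: cvg_nnsfun_approx => // x _; rewrite lee_fin le_max lexx orbT.
Qed.

Lemma amk_cvg k z : (fun n => amk k n z) @ \oo --> Num.max (- cc k z) 0.
Proof.
apply: (fine_cvg (f := fun n => (amk k n z)%:E)).
by apply: cvg_nnsfun_approx => // x _; rewrite lee_fin le_max lexx orbT.
Qed.


Definition gq n k z := apk k n z - amk k n z.

Lemma gq_cvg k z : (fun n => gq n k z) @ \oo --> cc k z.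
Proof.
rewrite -[cc k z]max_sub; apply: cvgB; [exact: apk_cvg|exact: amk_cvg].
Qed.

Lemma gq_b n k z : (gq n k z - cc k z) ^+ 2 <= cc k z ^+ 2.
Proof. by apply: sq_bound; [exact: apk_b|exact: amk_b]. Qed.

Lemma fn_eq n z : Zb z -> fn n z = \sum_(k < n) gq n k z *: hb k.
Proof.
move=> Zz; apply: eq_bigr => k _.
by rewrite indicE mem_set // !mul1r /gq scalerN scalerBl.
Qed.

Lemma fn_SS n z : Zb z ->
  `|fn n z - SS z n| ^+ 2 = \sum_(k < n) (gq n k z - cc k z) ^+ 2 * H6.ee ip hb k.
Proof.
move=> Zz; rewrite fn_eq // /SS /series /= big_mkord -sumrB.
have e1 : \sum_(i < n) (gq n i z *: hb i - cc i z *: hb i) = \sum_(i < n) (gq n i z - cc i z) *: hb i.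
  apply: eq_bigr => k _. first [ by rewrite [RHS]scalerBl | by rewrite -scalerBl | exact: (esym (scalerBl _ _ _)) ].
rewrite e1.
have := pyth hip hon (fun k => gq n k z - cc k z) 0 n.
by rewrite !big_mkord.
Qed.

Lemma fn_cvg z : Zb z -> fn ^~ z @ \oo --> phi z.
Proof.
move=> Zz.
pose u n k := (gq n k z - cc k z) ^+ 2 * H6.ee ip hb k.
have t : (fun n => \sum_(k < n) u n k) @ \oo --> (0:R).
  apply: (tannery (v := ww ^~ z)).
  - move=> n k; rewrite mulr_ge0 ?sqr_ge0 ?(ee_ge0 hb hip) //=.
    by apply: ler_wpM2r; [exact: (ee_ge0 hb hip)|exact: gq_b].
  - exact: (ww_cvg hip Zz).
  - move=> k; rewrite -(mul0r (H6.ee ip hb k)).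
    have h0 : (fun n => gq n k z - cc k z) @ \oo --> (0:R).
      by rewrite -(subrr (cc k z)); apply: cvgB; [exact: gq_cvg|exact: cvg_cst].
    have -> : (0:R) = 0 ^+ 2 by rewrite expr0n.
    apply: cvgM; last exact: cvg_cst.
    by rewrite expr2; apply: cvgM.
have hS := SS_to hip hon Zz.
apply/cvgrPdist_lt => e e0.
have e2 : 0 < e / 2 by rewrite divr_gt0.
move/cvgrPdist_lt : hS => /(_ _ e2) hS.
move/cvgrPdist_lt : t => /(_ ((e / 2) ^+ 2) (exprn_gt0 2 e2)) t.
near=> n.
have hA : `|phi z - SS z n| < e / 2 by near: n; exact: hS.
have hB : \sum_(k < n) u n k < (e / 2) ^+ 2.
  have : `|0 - \sum_(k < n) u n k| < (e / 2) ^+ 2 by near: n; exact: t.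
  rewrite sub0r normrN; apply: le_lt_trans; exact: ler_norm.
have hC : `|fn n z - SS z n| < e / 2.
  have : `|fn n z - SS z n| ^+ 2 < (e / 2) ^+ 2 by rewrite fn_SS.
  by rewrite ltr_pXn2r // nnegrE ?normr_ge0 // (ltW e2).
have -> : phi z - fn n z = (phi z - SS z n) - (fn n z - SS z n) by rewrite opprB addrA subrK.
apply: le_lt_trans (ler_normB _ _) _.
by rewrite (splitr e); apply: ltrD.
Unshelve. all: by end_near.
Qed.

Lemma phi_bochner : bochner_measurable P phi.
Proof.
exists fn; split; first exact: fn_simple.
exists (~` Zb); split; first exact: measurableC.
- exact: PC.
- move=> z /= h Zz; apply: h; exact: fn_cvg.
Qed.

End Boch.

End H10.
Import H10.

Import measurable_realfun.
Import Order.TTheory GRing.Theory Num.Theory.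
Import numFieldNormedType.Exports.
Local Open Scope classical_set_scope.
Local Open Scope ring_scope.

Theorem lemma1 (R : realType) (d : measure_display) (Z : measurableType d)
    (H : completeNormedModType R) (ip : H -> H -> R) (hb : nat -> H)
    (lam : {measure set Z -> \bar R}) (M : set (probability Z R))
    (nu : probability Z R -> H) (P : probability Z R)
    (D : (Z -> R) -> H) (A : H -> Z -> R) (beta : nat -> R) :
  (exists dist : Z -> Z -> R, polish_borel dist) ->
  inner_product ip -> padded_onb ip hb ->
  sigma_finite setT lam -> dominated lam M ->
  M P ->
  pathwise_derivative lam M P nu D ->
  adjoint ip lam M P D A ->
  (forall k, 0 <= beta k <= 1) ->
  cvg (series (fun k => beta k ^+ 2) @ \oo) ->
  let r := fun (h : H) (z : Z) =>
    limn (series (fun k => beta k * ip h (hb k) * A (hb k) z)) in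
  let phi := fun z : Z =>
    limn (series (fun k => (beta k * A (hb k) z) *: hb k)) in
  (exists Zb : set Z, [/\ measurable Zb, P Zb = 1%E &
     forall z, Zb z ->
       [/\ cvg (series (fun k => (beta k * A (hb k) z) *: hb k) @ \oo),
           (forall h, cvg (series (fun k => beta k * ip h (hb k) * A (hb k) z) @ \oo)),
           (forall a h g, r (a *: h + g) z = a * r h z + r g z),
           (exists C : R, forall h, `|r h z| <= C * `|h|) &
           (forall h, r h z = ip h (phi z))]])
  /\ bochner_measurable P phi
  /\ exists sigma : R,
       [/\ 0 <= sigma,
           ((sigma ^+ 2)%:E = \int[P]_z (`|phi z| ^+ 2)%:E)%E,
           ((sigma ^+ 2)%:E =
              \sum_(k <oo) ((beta k ^+ 2)%:E * \int[P]_z ((A (hb k) z) ^+ 2)%:E))%E &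
           sigma <= opnorm P A * Num.sqrt (limn (series (fun k => beta k ^+ 2))) ].
Proof.
move=> _ hip hon _ _ _ hpd hadj hbeta hcvg r phi.
have rser : forall h z, series (fun k => beta k * ip h (hb k) * A (hb k) z) =
    (fun n => ip h (SS hb A beta z n)).
  move=> h z; apply/funext => n; rewrite /SS /series /= (ipC hip).
  rewrite (ip_sum hip); apply: eq_bigr => k _.
  by rewrite (ipZl hip) (ipC hip) /H6.cc; ring.
have rto : forall h z, Zb ip hb A beta z ->
    series (fun k => beta k * ip h (hb k) * A (hb k) z) @ \oo --> ip h (phi z).
  move=> h z Zz; rewrite rser; apply: (ip_cvg hip).
  exact: (SS_to hip hon Zz).
have req : forall h z, Zb ip hb A beta z -> r h z = ip h (phi z).
  by move=> h z Zz; rewrite /r; apply: (cvg_lim (@Rhausdorff R)); exact: rto.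
split.
  exists (Zb ip hb A beta); split.
  - exact: (mZb hb beta hip hadj).
  - exact: (PZb hip hon hpd hadj hcvg).
  move=> z Zz; split.
  - exact: (SS_cvg hip hon Zz).
  - by move=> h; apply/cvg_ex; eexists; exact: rto.
  - by move=> a h g; rewrite !req // (ipL hip).
  - exists `|phi z| => h; rewrite req // mulrC; exact: (CS hip).
  - by move=> h; rewrite req.
split; first exact: (phi_bochner hip hon hpd hadj hcvg).
set Sig := (\sum_(k <oo) (beta k ^+ 2 * Ik hb P A k)%:E)%E.
have S0 : (0 <= Sig)%E by apply: nneseries_ge0 => k _ _; rewrite lee_fin mulr_ge0 ?sqr_ge0 ?(Ik_ge0 hb P A).
have Sf : Sig = (fine Sig)%:E.
  by rewrite fineK // ge0_fin_numE //; exact: (Sig_fin hip hon hpd hadj hcvg).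
have fS0 : 0 <= fine Sig by exact: fine_ge0.
exists (Num.sqrt (fine Sig)); split.
- exact: sqrtr_ge0.
- by rewrite sqr_sqrtr // -Sf (int_phi hip hon hpd hadj hcvg).
- rewrite sqr_sqrtr // -Sf; apply: eq_eseriesr => k _.
  by have := sqnormA hb hadj k; rewrite /sqnorm => ->; rewrite EFinM.
- have := Sig_le hip hon hpd hadj hcvg; rewrite -/Sig Sf lee_fin => hle.
  have op0 := opnorm_ge0 hip hpd hadj.
  apply: le_trans (ler_wsqrtr hle) _.
  by rewrite sqrtrM ?sqr_ge0 // sqrtr_sqr ger0_norm.
Qed.
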